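(* Let $p_j>0$, $q_{j+1}>0$, $r_j\ge 0$ ($j\ge 0$) be the one-step transition probabilities of a random walk on $\mathcal{N}=\{0,1,2,\dots\}$ (up-step $p_j$, holding $r_j$, down-step $q_j$ from state $j$), with $q_0:=0$ and $p_j+q_j+r_j=1$ for all $j\ge0$. Let $\pi_0:=1$, $\pi_n:=\frac{p_0\cdots p_{n-1}}{q_1\cdots q_n}$ ($n\ge1$), and define polynomials $Q_n$ by $Q_0(x)=1$, $p_0Q_1(x)=x-r_0$, and $xQ_n(x)=q_nQ_{n-1}(x)+r_nQ_n(x)+p_nQ_{n+1}(x)$ for $n\ge 1$. Let $\psi$ be the unique Borel probability measure on $[-1,1]$ with infinite support with respect to which the $Q_n$ are orthogonal, and let $\eta:=\sup\operatorname{supp}(\psi)$. If \[\sum_{j\ge 0}\frac{1}{p_j\pi_j}\sum_{k=0}^j r_k\pi_k=\infty,\] then $\lim_{n\to\infty}|Q_n(-\eta)/Q_n(\eta)|=\infty$.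
   Context: It is known that $\eta>0$ and that $Q_n(x)>0$ for all $n\ge0$ whenever $x\ge\eta$. *)

(* Defs.v *)
From HB Require Import structures.
From mathcomp Require Import all_boot all_order all_algebra.
From mathcomp Require Import all_classical all_reals all_analysis.
Set Implicit Arguments. Unset Strict Implicit. Unset Printing Implicit Defensive.
Import Order.TTheory GRing.Theory Num.Theory.
Import numFieldNormedType.Exports.
Local Open Scope classical_set_scope.
Local Open Scope ring_scope.

Definition pi_rw {R : realType} (p q : nat -> R) (n : nat) : R :=
  (\prod_(i < n) p i) / (\prod_(i < n) q i.+1).

Fixpoint Qpair {R : realType} (p q r : nat -> R) (x : R) (n : nat) : R * R :=
  match n with
  | 0 => (1, (x - r 0) / p 0)
  | m.+1 => let: (a, b) := Qpair p q r x m in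
            (b, ((x - r m.+1) * b - q m.+1 * a) / p m.+1)
  end.

Definition Qpoly {R : realType} (p q r : nat -> R) (n : nat) (x : R) : R :=
  (Qpair p q r x n).1.

Definition msupport {R : realType} (mu : set R -> \bar R) : set R :=
  [set x | forall e : R, 0 < e -> (0 < mu (ball x e))%E].

(* Main.v *)
Require Import Defs.
From HB Require Import structures.
From mathcomp Require Import all_boot all_order all_algebra.
From mathcomp Require Import all_classical all_reals all_analysis.
From mathcomp Require Import lra ring zify.
From mathcomp Require Import measurable_realfun.
Import Order.TTheory GRing.Theory Num.Theory.
Import numFieldNormedType.Exports.
Local Open Scope classical_set_scope.
Local Open Scope ring_scope.
Lemma Q0 {R : realType} (p q r : nat -> R) x : Qpoly p q r 0 x = 1.
Proof. by []. Qed.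
Lemma Q1 {R : realType} (p q r : nat -> R) x : 0 < p 0 ->
  p 0 * Qpoly p q r 1 x = x - r 0.
Proof. move=> h; rewrite /Qpoly /= mulrC divfK //; exact: lt0r_neq0. Qed.
Lemma QS {R : realType} (p q r : nat -> R) x n : 0 < p n.+1 ->
  p n.+1 * Qpoly p q r n.+2 x = (x - r n.+1) * Qpoly p q r n.+1 x - q n.+1 * Qpoly p q r n x.
Proof.
move=> h; rewrite /Qpoly /=; case: (Qpair p q r x n) => a b /=.
rewrite mulrC divfK //; exact: lt0r_neq0.
Qed.
Lemma pi0 {R : realType} (p q : nat -> R) : pi_rw p q 0 = 1.
Proof. by rewrite /pi_rw !big_ord0 divr1. Qed.
Lemma prodq_neq0 {R : realType} (q : nat -> R) n : (forall j, 0 < q j.+1) ->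
  \prod_(i < n) q i.+1 != 0.
Proof. move=> h; apply: lt0r_neq0; apply: prodr_gt0 => i _; exact: h. Qed.
Lemma piS {R : realType} (p q : nat -> R) n : (forall j, 0 < q j.+1) ->
  pi_rw p q n.+1 * q n.+1 = pi_rw p q n * p n.
Proof.
move=> h; have h1 := prodq_neq0 q n h; have h2 : q n.+1 != 0 by apply: lt0r_neq0.
rewrite /pi_rw !big_ord_recr /=.
by field; rewrite h1 h2.
Qed.
Lemma pi_gt0 {R : realType} (p q : nat -> R) n : (forall j, 0 < p j) -> (forall j, 0 < q j.+1) ->
  0 < pi_rw p q n.
Proof.
move=> hp hq; rewrite /pi_rw divr_gt0 //; apply: prodr_gt0 => i _ //.
Qed.
Lemma a_step {R : realType} (p q r : nat -> R) (eta : R) n :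
  (forall j, 0 < p j) -> (forall j, 0 < q j.+1) -> q 0 = 0 ->
  (forall j, p j + q j + r j = 1) ->
  pi_rw p q n * p n * (Qpoly p q r n.+1 eta - Qpoly p q r n eta) =
  (eta - 1) * \sum_(k < n.+1) pi_rw p q k * Qpoly p q r k eta.
Proof.
move=> hp hq q0 hs; elim: n => [|n IH].
  rewrite big_ord1 pi0 Q0; have := Q1 p q r eta (hp 0); have := hs 0; rewrite q0.
  lra.
rewrite big_ord_recr /=.
move: IH.
have E1 := congr1 (fun t => pi_rw p q n.+1 * t) (QS p q r eta n (hp n.+1)).
have E2 := congr1 (fun t => t * Qpoly p q r n.+1 eta) (piS p q n hq).
have E3 := congr1 (fun t => t * Qpoly p q r n eta) (piS p q n hq).
have E4 := congr1 (fun t => pi_rw p q n.+1 * t * Qpoly p q r n.+1 eta) (hs n.+1).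
simpl in *.
lra.
Qed.
Definition bb {R : realType} (p q r : nat -> R) (eta : R) n :=
  (-1) ^+ n * Qpoly p q r n (- eta).
Lemma b1 {R : realType} (p q r : nat -> R) eta : 0 < p 0 ->
  p 0 * bb p q r eta 1 = eta + r 0.
Proof. move=> h; rewrite /bb expr1 mulrCA Q1 //; lra. Qed.
Lemma bS {R : realType} (p q r : nat -> R) eta n : 0 < p n.+1 ->
  p n.+1 * bb p q r eta n.+2 = (eta + r n.+1) * bb p q r eta n.+1 - q n.+1 * bb p q r eta n.
Proof.
move=> h; rewrite /bb mulrCA QS // !exprS; set u := (-1) ^+ n.
set A := Qpoly _ _ _ _ _; set B := Qpoly _ _ _ _ _.
ring.
Qed.
Lemma W_step {R : realType} (p q r : nat -> R) (eta : R) n :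
  (forall j, 0 < p j) -> (forall j, 0 < q j.+1) -> q 0 = 0 ->
  pi_rw p q n * p n * (Qpoly p q r n eta * bb p q r eta n.+1 - bb p q r eta n * Qpoly p q r n.+1 eta) =
  2 * \sum_(k < n.+1) r k * pi_rw p q k * Qpoly p q r k eta * bb p q r eta k.
Proof.
move=> hp hq q0; elim: n => [|n IH].
  rewrite big_ord1 pi0 Q0; have := Q1 p q r eta (hp 0); have := b1 p q r eta (hp 0).
  rewrite /bb expr0 mul1r Q0. lra.
rewrite big_ord_recr /=.
move: IH.
have E1 := congr1 (fun t => pi_rw p q n.+1 * Qpoly p q r n.+1 eta * t) (bS p q r eta n (hp n.+1)).
have E2 := congr1 (fun t => pi_rw p q n.+1 * bb p q r eta n.+1 * t) (QS p q r eta n (hp n.+1)).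
have E3 := congr1 (fun t => t * Qpoly p q r n.+1 eta * bb p q r eta n) (piS p q n hq).
have E4 := congr1 (fun t => t * bb p q r eta n.+1 * Qpoly p q r n eta) (piS p q n hq).
simpl in *.
lra.
Qed.
Definition SS {R : realType} (p q r : nat -> R) N :=
  \sum_(j < N) (p j * pi_rw p q j)^-1 * \sum_(k < j.+1) r k * pi_rw p q k.

Lemma a_mono {R : realType} (p q r : nat -> R) (eta : R) :
  (forall j, 0 < p j) -> (forall j, 0 < q j.+1) -> q 0 = 0 ->
  (forall j, p j + q j + r j = 1) -> eta <= 1 ->
  (forall n, 0 < Qpoly p q r n eta) ->
  forall k n, (k <= n)%N -> Qpoly p q r n eta <= Qpoly p q r k eta.
Proof.
move=> hp hq q0 hs he apos k n /subnK <-; elim: (n - k)%N => [|m IH] //=.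
rewrite addSn; apply: le_trans IH.
have := a_step p q r eta (m + k) hp hq q0 hs.
have hP : 0 < pi_rw p q (m + k) * p (m + k) by rewrite mulr_gt0 // pi_gt0.
have hsum : 0 <= \sum_(k0 < (m + k).+1) pi_rw p q k0 * Qpoly p q r k0 eta.
  by apply: sumr_ge0 => i _; rewrite mulr_ge0 // ltW // ?pi_gt0.
move=> E.
have : pi_rw p q (m + k) * p (m + k) * (Qpoly p q r (m + k).+1 eta - Qpoly p q r (m + k) eta) <= 0.
  by rewrite E; apply: mulr_le0_ge0 => //; lra.
rewrite pmulr_rle0 //; lra.
Qed.

Lemma SS_ge0 {R : realType} (p q r : nat -> R) N :
  (forall j, 0 < p j) -> (forall j, 0 < q j.+1) -> (forall j, 0 <= r j) -> 0 <= SS p q r N.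
Proof.
move=> hp hq hr; apply: sumr_ge0 => j _; apply: mulr_ge0.
  by rewrite invr_ge0 ltW // mulr_gt0 // pi_gt0.
by apply: sumr_ge0 => k _; rewrite mulr_ge0 // ltW // pi_gt0.
Qed.

Lemma main_ineq {R : realType} (p q r : nat -> R) (eta : R) :
  (forall j, 0 < p j) -> (forall j, 0 < q j.+1) -> (forall j, 0 <= r j) -> q 0 = 0 ->
  (forall j, p j + q j + r j = 1) -> eta <= 1 ->
  (forall n, 0 < Qpoly p q r n eta) ->
  forall n k, (k <= n)%N -> Qpoly p q r k eta * (1 + 2 * SS p q r k) <= bb p q r eta k.
Proof.
move=> hp hq hr q0 hs he apos; elim => [|n IH] k.
  by rewrite leqn0 => /eqP ->; rewrite /SS big_ord0 /bb !Q0 expr0; lra.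
rewrite leq_eqVlt => /orP [/eqP ->|]; last exact: IH.
have IHa : forall k, (k <= n)%N -> Qpoly p q r k eta <= bb p q r eta k.
  move=> k0 hk0; apply: le_trans (IH k0 hk0).
  have := SS_ge0 p q r k0 hp hq hr; have := apos k0; nra.
set a := Qpoly p q r n eta; set a' := Qpoly p q r n.+1 eta.
set b := bb p q r eta n; set b' := bb p q r eta n.+1.
set T := \sum_(k < n.+1) r k * pi_rw p q k.
set P := pi_rw p q n * p n.
have hP : 0 < P by rewrite mulr_gt0 // pi_gt0.
have ha : 0 < a by apply: apos.
have ha' : 0 < a' by apply: apos.
have hT : 0 <= T by apply: sumr_ge0 => i _; rewrite mulr_ge0 // ltW // pi_gt0.
have hW : 2 * (a * a' * T) <= P * (a * b' - b * a').
  rewrite /P W_step // ler_pM2l // /T mulr_sumr; apply: ler_sum => i _.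
  have hi : (i <= n)%N by rewrite -ltnS.
  have h1 := a_mono p q r eta hp hq q0 hs he apos _ _ hi.
  have h2 := a_mono p q r eta hp hq q0 hs he apos _ _ (leqnSn n).
  have h3 := IHa i hi.
  have h4 : 0 <= r i * pi_rw p q i by rewrite mulr_ge0 // ltW // pi_gt0.
  have h5 := apos i.
  rewrite -/a -/a' in h1 h2.
  have h6 : a * a' <= Qpoly p q r i eta * bb p q r eta i by nra.
  have := ler_wpM2l h4 h6. lra.
have hS : SS p q r n.+1 = SS p q r n + P^-1 * T.
  by rewrite /SS big_ord_recr /= /P [p n * _]mulrC.
rewrite hS.
have IHn := IH n (leqnn n); rewrite -/a -/b in IHn.
have hPT : P * (P^-1 * T) = T by rewrite mulrA divff ?mul1r // lt0r_neq0.
set t := P^-1 * T in hPT *.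
have key : P * a * (a' * (1 + 2 * (SS p q r n + t))) <= P * a * b'.
  have : P * a' * (a * (1 + 2 * SS p q r n)) <= P * a' * b.
    by apply: ler_wpM2l => //; rewrite mulr_ge0 // ltW.
  nra.
rewrite ler_pM2l // in key; rewrite mulr_gt0 //.
Qed.

Lemma final_alg {R : realType} (p q r : nat -> R) (eta : R) :
  (forall j, 0 < p j) -> (forall j, 0 < q j.+1) -> (forall j, 0 <= r j) -> q 0 = 0 ->
  (forall j, p j + q j + r j = 1) -> eta <= 1 ->
  (forall n, 0 < Qpoly p q r n eta) ->
  (fun N => \sum_(0 <= j < N)
       (p j * pi_rw p q j)^-1 * \sum_(0 <= k < j.+1) r k * pi_rw p q k)
     @ \oo --> +oo ->
  (fun n => `| Qpoly p q r n (- eta) / Qpoly p q r n eta |) @ \oo --> +oo.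
Proof.
move=> hp hq hr q0 hs he apos hdiv.
apply: (ger_cvgy _ hdiv); apply: nearW => n.
have -> : \sum_(0 <= j < n) (p j * pi_rw p q j)^-1 * \sum_(0 <= k < j.+1) r k * pi_rw p q k
   = SS p q r n.
  rewrite /SS big_mkord; apply: eq_bigr => j _; by rewrite big_mkord.
have h := main_ineq p q r eta hp hq hr q0 hs he apos n n (leqnn n).
have hS := SS_ge0 p q r n hp hq hr.
have ha := apos n.
have e : `| Qpoly p q r n (- eta) | = `| bb p q r eta n |.
  by rewrite /bb normrM normrX normrN1 expr1n mul1r.
rewrite normrM e normfV (gtr0_norm ha).
rewrite ler_pdivlMr //.
apply: le_trans (ler_norm _).
nra.
Qed.


Fixpoint PQpair {R : realType} (p q r : nat -> R) (n : nat) : {poly R} * {poly R} :=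
  match n with
  | 0 => (1, (p 0)^-1 *: ('X - (r 0)%:P))
  | m.+1 => let: (a, b) := PQpair p q r m in
            (b, (p m.+1)^-1 *: (('X - (r m.+1)%:P) * b - (q m.+1)%:P * a))
  end.

Definition PQ {R : realType} (p q r : nat -> R) n := (PQpair p q r n).1.

Lemma PQpair_horner {R : realType} (p q r : nat -> R) x n :
  (PQpair p q r n).1.[x] = (Qpair p q r x n).1 /\ (PQpair p q r n).2.[x] = (Qpair p q r x n).2.
Proof.
elim: n => [|n [IH1 IH2]] /=.
  by rewrite hornerE hornerZ !hornerE mulrC.
move: IH1 IH2; case: (PQpair p q r n) => A B; case: (Qpair p q r x n) => a b /= hA hB.
split => //.
by rewrite hornerZ !hornerE hA hB [_ * _^-1]mulrC.
Qed.

Lemma PQ_horner {R : realType} (p q r : nat -> R) x n : (PQ p q r n).[x] = Qpoly p q r n x.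
Proof. by have [] := PQpair_horner p q r x n. Qed.

Lemma PQpair_size {R : realType} (p q r : nat -> R) n : (forall j, 0 < p j) ->
  size (PQpair p q r n).1 = n.+1 /\ size (PQpair p q r n).2 = n.+2.
Proof.
move=> hp; elim: n => [|n [IH1 IH2]] /=.
  rewrite size_poly1 size_scale ?invr_eq0 ?lt0r_neq0 //.
  by rewrite size_XsubC.
move: IH1 IH2; case: (PQpair p q r n) => A B /= hA hB.
split => //.
rewrite size_scale ?invr_eq0 ?lt0r_neq0 //.
have hXB : size (('X - (r n.+1)%:P) * B) = n.+3.
  rewrite size_mul ?polyXsubC_eq0 // ?size_XsubC ?hB //.
  by rewrite -size_poly_eq0 hB.
rewrite size_addl hXB // size_opp.
apply: (leq_ltn_trans (size_polyMleq _ _)).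
rewrite hA size_polyC; case: (q n.+1 != 0) => /=; lia.
Qed.

Lemma PQ_size {R : realType} (p q r : nat -> R) n : (forall j, 0 < p j) ->
  size (PQ p q r n) = n.+1.
Proof. by move=> hp; have [] := PQpair_size p q r n hp. Qed.


Lemma intQ {R : realType} (p q r : nat -> R) (psi : probability R R) (D : set R) :
  (forall P : {poly R}, psi.-integrable D (fun x => (P.[x])%:E)) ->
  forall n (P : {poly R}), psi.-integrable D (fun x => (Qpoly p q r n x * P.[x])%:E).
Proof.
move=> hint n P.
suff -> : (fun x => (Qpoly p q r n x * P.[x])%:E) = (fun x => ((PQ p q r n * P).[x])%:E).
  exact: hint.
by apply/funext => x; rewrite hornerM PQ_horner.
Qed.

Lemma ortho_poly {R : realType} (p q r : nat -> R) (psi : probability R R) (D : set R) :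
  (forall j, 0 < p j) -> measurable D ->
  (forall P : {poly R}, psi.-integrable D (fun x => (P.[x])%:E)) ->
  (forall n m, n <> m ->
     (\int[psi]_(x in D) (Qpoly p q r n x * Qpoly p q r m x)%:E = 0)%E) ->
  forall n m (P : {poly R}), (size P <= m)%N -> (m <= n)%N ->
     (\int[psi]_(x in D) (Qpoly p q r n x * P.[x])%:E = 0)%E.
Proof.
move=> hp mD hint horth n; elim => [|m IH] P hPm hmn.
  move: hPm; rewrite leqn0 size_poly_eq0 => /eqP ->.
  under eq_integral do rewrite horner0 mulr0.
  exact: integral0.
have hsz := PQ_size p q r m hp.
have hlc : lead_coef (PQ p q r m) != 0.
  by rewrite lead_coef_eq0 -size_poly_eq0 hsz.
set c := P`_m / lead_coef (PQ p q r m).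
set P' := P - c *: PQ p q r m.
have hP' : (size P' <= m)%N.
  apply/leq_sizeP => j hj; rewrite /P' coefB coefZ.
  move: hj; rewrite leq_eqVlt => /orP [/eqP <-|hj].
    have lcE : lead_coef (PQ p q r m) = (PQ p q r m)`_m by rewrite lead_coefE hsz.
    by rewrite /c -lcE divfK // subrr.
  have /leq_sizeP h1 := hPm; have /leq_sizeP h2 : (size (PQ p q r m) <= m.+1)%N by rewrite hsz.
  by rewrite h1 // h2 // mulr0 subr0.
have -> : (\int[psi]_(x in D) (Qpoly p q r n x * P.[x])%:E =
   \int[psi]_(x in D) ((Qpoly p q r n x * P'.[x])%:E + c%:E * (Qpoly p q r n x * Qpoly p q r m x)%:E))%E.
  apply: eq_integral => x _.
  rewrite -EFinM -EFinD; congr EFin.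
  rewrite /P' hornerD hornerN hornerZ PQ_horner; ring.
rewrite integralD //; last first.
  apply: integrableZl => //.
  have := intQ p q r psi D hint n (PQ p q r m).
  by under eq_fun do rewrite PQ_horner.
  exact: intQ.
rewrite integralZl //; last first.
  have := intQ p q r psi D hint n (PQ p q r m).
  by under eq_fun do rewrite PQ_horner.
rewrite IH // ?(ltnW hmn) // horth ?mule0 ?adde0 //.
move=> e; move: hmn; rewrite e; lia.
Qed.


Lemma supp_sub {R : realType} (psi : probability R R) :
  psi (~` `[-1, 1]) = 0%E -> forall x, msupport psi x -> -1 <= x <= 1.
Proof.
set C := (X in psi X = _) => h0 x hx; apply/negPn/negP => hn.
have he : 0 < `|x| - 1.
  move: hn; rewrite negb_and -!ltNge => /orP [] h.
    rewrite ltr0_norm; lra.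
  rewrite gtr0_norm; lra.
have := hx _ he.
have sub : ball x (`|x| - 1) `<=` C.
  move=> y; rewrite -ball_normE /C /= in_itv /= => hy /andP [h1 h2].
  have := ler_dist_dist x y.
  have : `|y| <= 1 by rewrite ler_norml h1 h2.
  move=> hy1 hd.
  have := ler_norm (`|x| - `|y|). lra.
have mC : measurable C.
  by apply: measurableC; exact: measurable_itv.
have := le_measure psi (mem_set (measurable_realfun.measurable_ball x (`|x| - 1))) (mem_set mC) sub.
move=> hle hlt.
have h0' : (psi C <= 0)%E by rewrite h0.
by have := lt_le_trans hlt (le_trans hle h0'); rewrite ltxx.
Qed.

Lemma supp_ne {R : realType} (psi : probability R R) :
  infinite_set (msupport psi) -> msupport psi !=set0.
Proof.
move=> hinf; apply/set0P/eqP => h; apply: hinf; rewrite h; exact: finite_set0.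
Qed.

Lemma eta_facts {R : realType} (psi : probability R R) :
  psi (~` `[-1, 1]) = 0%E -> infinite_set (msupport psi) ->
  (forall x, msupport psi x -> x <= sup (msupport psi)) /\
  sup (msupport psi) <= 1 /\ -1 <= sup (msupport psi).
Proof.
move=> h0 hinf.
have hs := supp_sub psi h0.
have hne := supp_ne psi hinf.
have hub : has_ubound (msupport psi) by exists 1 => x /hs /andP [].
have ub := ub_le_sup hub.
split => //; split.
  by apply: ge_sup => // x /hs /andP [].
have [x0 hx0] := hne.
have := ub _ hx0; have := hs _ hx0; move=> /andP [h1 _] h2; lra.
Qed.

Lemma null_le {R : realType} (psi : probability R R) (A B : set R) :
  measurable A -> measurable B -> A `<=` B -> psi B = 0%E -> psi A = 0%E.
Proof.
move=> mA mB sub hB; apply/le_anti/andP; split; last exact: measure_ge0.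
have := le_measure psi (mem_set mA) (mem_set mB) sub.
have hB' : (psi B <= 0)%E by rewrite hB.
move=> h; exact: (le_trans h hB').
Qed.

Lemma null_above {R : realType} (psi : probability R R) :
  psi (~` `[-1, 1]) = 0%E -> infinite_set (msupport psi) ->
  psi `]sup (msupport psi), +oo[%classic = 0%E.
Proof.
move=> h0 hinf.
have [hub [he1 hem1]] := eta_facts psi h0 hinf.
set eta := sup (msupport psi) in hub he1 hem1 *.
set A := [set t | eta <= t /\ psi `]t, +oo[%classic = 0%E].
have h1 : A 1.
  split => //; apply: null_le h0; try exact: measurable_itv.
    by apply: measurableC; exact: measurable_itv.
  by move=> x; rewrite /= !in_itv /= andbT => hx /andP [_ hx1]; lra.
have hAne : A !=set0 by exists 1.
have hAlb : has_lbound A by exists eta => t [].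
set ts := inf A.
have hets : eta <= ts by apply: lb_le_inf => // t [].
have Z : forall s, ts < s -> psi `]s, +oo[%classic = 0%E.
  move=> s hs; have [t [_ ht] hts] := @inf_adherent R A (s - ts) (ltac:(by rewrite subr_gt0)) (conj hAne hAlb).
  apply: null_le ht; try exact: measurable_itv.
  move=> x; rewrite /= !in_itv /= !andbT => hx; lra.
have N : psi `]ts, +oo[%classic = 0%E.
  have : psi.-negligible (\bigcup_k `]ts + k.+1%:R^-1, +oo[%classic).
    apply: (@negligible_bigcup _ _ _ psi (fun k => `]ts + k.+1%:R^-1, +oo[%classic)) => k; exists `]ts + k.+1%:R^-1, +oo[%classic; split => //.
    apply: Z; rewrite ltrDl invr_gt0 ltr0n //.
  move=> [B [mB hB sub]]; apply: null_le hB => //.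
  move=> x; rewrite /= in_itv /= andbT => hx.
  have [k hk] := ltr_add_invr hx.
  by apply: sub; exists k => //=; rewrite in_itv /= andbT.
have hts : ts <= eta.
  rewrite leNgt; apply/negP => hlt.
  have hns : ~ msupport psi ts by move=> /hub; lra.
  have [e he hbe] : exists2 e, 0 < e & psi (ball ts e) = 0%E.
    apply: contra_notP hns => hne e he; rewrite lt0e measure_ge0 andbT.
    by apply/eqP => hz; apply: hne; exists e.
  set e' := Num.min e (ts - eta).
  have he' : 0 < e' by rewrite lt_min he subr_gt0.
  have he'1 : e' <= e by rewrite ge_min lexx.
  have he'2 : e' <= ts - eta by rewrite ge_min lexx orbT.
  have hA0 : A (ts - e' / 2).
    split; first lra.
    apply: null_le (_ : `]ts - e' / 2, +oo[%classic `<=` ball ts e `|` `]ts, +oo[%classic) _.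
    - exact: measurable_itv.
    - apply: measurableU; last exact: measurable_itv.
      exact: measurable_realfun.measurable_ball.
    - move=> x; rewrite /= !in_itv /= !andbT => hx.
      case: (ltP ts x) => hx2; [by right|left].
      rewrite -ball_normE /= ger0_norm; lra.
    - apply/le_anti/andP; split; last exact: measure_ge0.
      apply: le_trans (measureU2 psi _ _) _.
      + exact: measurable_realfun.measurable_ball.
      + exact: measurable_itv.
      have h1' : (psi (ball ts e) <= 0)%E by rewrite hbe.
      have h2' : (psi `]ts, +oo[%classic <= 0)%E by rewrite N.
      by have := leeD h1' h2'; rewrite adde0.
  have := ge_inf hAlb hA0; rewrite -/ts; lra.
apply: null_le N; try exact: measurable_itv.
move=> x; rewrite /= !in_itv /= !andbT => hx; lra.
Qed.


Lemma poly_bound {R : realType} (P : {poly R}) x : -1 <= x <= 1 ->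
  `|P.[x]| <= \sum_(i < size P) `|P`_i|.
Proof.
move=> /andP [h1 h2]; rewrite horner_coef.
apply: le_trans (ler_norm_sum _ _ _) _; apply: ler_sum => i _.
rewrite normrM normrX; apply: ler_piMr => //.
by apply: exprn_ile1 => //; rewrite ler_norml h1 h2.
Qed.

Lemma poly_integrable {R : realType} (psi : probability R R) (a b : R) (P : {poly R}) :
  -1 <= a -> a <= b -> b <= 1 ->
  psi.-integrable `[a, b]%classic (fun x => (P.[x])%:E).
Proof.
move=> ha hab hb.
have mD : measurable (`[a, b]%classic : set R) by exact: measurable_itv.
apply: (@measurable_bounded_integrable _ _ _ psi (fun x => P.[x])) => //.
- apply: le_lt_trans (probability_le1 psi mD) _; exact: ltey.
- apply: measurable_funS (measurable_realfun.continuous_measurable_fun _) => //; exact: continuous_horner.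
- have hPF : ProperFilter (globally (`[a, b]%classic : set R)).
    apply: (@globally_properfilter _ _ a); rewrite /= in_itv /= lexx hab //.
  apply/(@ex_bound _ _ _ _ _ hPF); exists (\sum_(i < size P) `|P`_i|).
  move=> x; rewrite /= in_itv /= => /andP [h1 h2]; apply: poly_bound; apply/andP; split; lra.
Qed.

Lemma compl_null {R : realType} (psi : probability R R) :
  psi (~` `[-1, 1]) = 0%E -> infinite_set (msupport psi) ->
  psi (~` `[-1, sup (msupport psi)]%classic) = 0%E.
Proof.
move=> h0 hinf.
have N := null_above psi h0 hinf.
move: h0; set C := (X in psi X = _) => h0.
have mC : measurable C by apply: measurableC; exact: measurable_itv.
apply: (@null_le _ psi _ (C `|` `]sup (msupport psi), +oo[%classic)).
- by apply: measurableC; exact: measurable_itv.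
- by apply: measurableU => //; exact: measurable_itv.
- move=> x; rewrite /C /= !in_itv /= => /negP; rewrite negb_and -!ltNge => /orP [] hx.
    by left; apply/negP; rewrite negb_and -!ltNge hx.
  by right; rewrite /= hx.
- apply/le_anti/andP; split; last exact: measure_ge0.
  apply: le_trans (measureU2 psi mC _) _; first exact: measurable_itv.
  have h1' : (psi C <= 0)%E by rewrite h0.
  have h2' : (psi `]sup (msupport psi), +oo[%classic <= 0)%E by rewrite N.
  by have := leeD h1' h2'; rewrite adde0.
Qed.

Lemma int_D {R : realType} (psi : probability R R) (D : set R) (f : R -> R) :
  measurable D -> psi (~` D) = 0%E -> continuous f ->
  (\int[psi]_x (f x)%:E = \int[psi]_(x in D) (f x)%:E)%E.
Proof.
move=> mD h0 cf.
have mf : measurable_fun setT (EFin \o f).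
  apply: measurableT_comp => //; exact: measurable_realfun.continuous_measurable_fun.
rewrite -(setUv D) integral_setU //.
- rewrite (@null_set_integral _ _ _ psi (~` D) (fun x => (f x)%:E)) ?adde0 //.
  + exact: measurableC.
  + apply: measurable_funS mf => //; exact: measurableC.
- exact: measurableC.
- by rewrite setUv.
- by rewrite /disj_set setICr.
Qed.

Lemma Q_at1 {R : realType} (p q r : nat -> R) :
  (forall j, 0 < p j) -> (forall j, 0 < q j.+1) -> q 0 = 0 ->
  (forall j, p j + q j + r j = 1) -> forall n, Qpoly p q r n 1 = 1.
Proof.
move=> hp hq q0 hs; elim => [|n IH] //.
have := a_step p q r 1 n hp hq q0 hs; rewrite subrr mul0r.
have hP : 0 < pi_rw p q n * p n by rewrite mulr_gt0 // pi_gt0.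
move/eqP; rewrite mulf_eq0 (negbTE (lt0r_neq0 hP)) /= subr_eq0 IH => /eqP //.
Qed.

Lemma no_root {R : realType} (p q r : nat -> R) (psi : probability R R) :
  (forall j, 0 < p j) ->
  psi (~` `[-1, 1]) = 0%E ->
  infinite_set (msupport psi) ->
  (forall n m, n <> m ->
     (\int[psi]_x (Qpoly p q r n x * Qpoly p q r m x)%:E = 0)%E) ->
  forall n y, sup (msupport psi) <= y -> Qpoly p q r n y != 0.
Proof.
move=> hp h0 hinf horth n y hy.
have [hub [he1 hem1]] := eta_facts psi h0 hinf.
have hs := supp_sub psi h0.
have hD0 := compl_null psi h0 hinf.
set eta := sup (msupport psi) in hub he1 hem1 hD0 hy.
set D := `[-1, eta]%classic in hD0.
have mD : measurable D by exact: measurable_itv.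
have hint : forall P : {poly R}, psi.-integrable D (fun x => (P.[x])%:E).
  by move=> P; apply: poly_integrable => //; lra.
have horthD : forall n m, n <> m ->
     (\int[psi]_(x in D) (Qpoly p q r n x * Qpoly p q r m x)%:E = 0)%E.
  move=> n0 m0 hnm; rewrite -(int_D psi D (fun x => Qpoly p q r n0 x * Qpoly p q r m0 x) mD hD0).
    exact: horth.
  have -> : (fun x => Qpoly p q r n0 x * Qpoly p q r m0 x) = horner (PQ p q r n0 * PQ p q r m0).
    by apply/funext => x; rewrite hornerM !PQ_horner.
  exact: continuous_horner.
apply/negP => /eqP hQy.
have hPn0 : PQ p q r n != 0 by rewrite -size_poly_eq0 PQ_size.
have [x0 hx0 hQx0] : exists2 x0, msupport psi x0 & Qpoly p q r n x0 != 0.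
  apply: contra_notP (fun x => x) => hall.
  have [B hB hsz] := infinite_set_fset n.+1 hinf.
  have hall' : all (root (PQ p q r n)) (finmap.enum_fset B).
    apply/allP => x hx; rewrite /root PQ_horner.
    apply/negPn/negP => hnz; apply: hall; exists x => //; exact: hB.
  have := max_poly_roots hPn0 hall' (finmap.fset_uniq B).
  by rewrite PQ_size // ltnNge hsz.
have hroot : root (PQ p q r n) y by rewrite /root PQ_horner hQy.
case/factor_theorem: hroot => Rp hRp.
have hRp0 : Rp != 0 by apply: contraNneq hPn0; rewrite hRp => ->; rewrite mul0r.
have hszR : (size Rp <= n)%N.
  have := PQ_size p q r n hp; rewrite hRp size_mul // ?polyXsubC_eq0 // size_XsubC.
  rewrite addn2 /= => [[]] ->; lia.
have hQR : forall x, Qpoly p q r n x = Rp.[x] * (x - y).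
  by move=> x; rewrite -PQ_horner hRp hornerM hornerXsubC.
have hI := ortho_poly p q r psi D hp mD hint horthD n n (- Rp) ltac:(by rewrite size_opp) (leqnn n).
set h := fun x => Qpoly p q r n x * (- Rp).[x].
have hh : forall x, h x = (y - x) * Rp.[x] ^+ 2.
  by move=> x; rewrite /h hQR hornerN; ring.
have [hx0a hx0b] : -1 <= x0 /\ x0 <= eta.
  by have := hs _ hx0; have := hub _ hx0; move=> ? /andP [? ?]; split.
have hRx0 : Rp.[x0] != 0 by apply: contraNneq hQx0; rewrite hQR => ->; rewrite mul0r.
have hx0y : x0 < y.
  rewrite lt_neqAle (le_trans hx0b hy) andbT; apply: contraNneq hQx0 => ->; exact/eqP.
have hpos : 0 < h x0.
  rewrite hh mulr_gt0 ?subr_gt0 // exprn_even_gt0 //.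
have ch : continuous h.
  have -> : h = horner (PQ p q r n * - Rp) by apply/funext => x; rewrite /h hornerM PQ_horner.
  exact: continuous_horner.
set k := h x0 / 2.
have hk : 0 < k by rewrite divr_gt0.
have hnear := cvgr_gt (h x0) (ch x0) k ltac:(rewrite /k; lra).
have [e he hball] := (nbhs_ballP _ _).1 hnear.
set A : set R := ball x0 e.
have mA : measurable A by exact: measurable_ball.
have mh : measurable_fun D (fun x => (h x)%:E).
  apply/measurable_EFinP; apply: measurable_funS (continuous_measurable_fun ch) => //.
have L : (\int[psi]_(x in D) (k * \1_A x)%:E <= \int[psi]_(x in D) (h x)%:E)%E.
  apply: ge0_le_integral => //.
  - by move=> x _; rewrite lee_fin mulr_ge0 // ?ltW // indicE; case: (_ \in _).
  - apply/measurable_EFinP; apply: measurable_funM => //; exact: measurable_indic.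
  - move=> x; rewrite /D /= in_itv /= => /andP [hx1 hx2]; rewrite lee_fin indicE.
    case: (boolP (x \in A)) => hxA; rewrite ?mulr1 ?mulr0.
      by apply: ltW; apply: hball; rewrite inE in hxA.
    rewrite hh mulr_ge0 ?sqr_ge0 //; lra.
have hI' : (\int[psi]_(x in D) (h x)%:E = 0)%E by exact: hI.
have E : (\int[psi]_(x in D) (k * \1_A x)%:E = k%:E * psi (A `&` D))%E.
  rewrite (@integralZl_indic _ _ _ psi D mD (fun=> A) k) //.
    by rewrite integral_indic.
  by move=> hk0; have := lt_trans hk hk0; rewrite ltxx.
have hAD : (0 < psi (A `&` D))%E.
  have hApos := hx0 e he.
  have hAD' : (psi A = psi (A `\` D) + psi (A `&` D))%E := measureDI psi mA mD.
  have hnull : psi (A `\` D) = 0%E.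
    apply: null_le hD0 => //.
    - exact: measurableD.
    - exact: measurableC.
  move: hApos; rewrite hAD' hnull add0e //.
rewrite E hI' in L.
have hk' : (0 < k%:E)%E by rewrite lte_fin.
by have := lt_le_trans (mule_gt0 hk' hAD) L; rewrite ltxx.
Qed.

Lemma Q_pos {R : realType} (p q r : nat -> R) (psi : probability R R) :
  (forall j, 0 < p j) -> (forall j, 0 < q j.+1) -> q 0 = 0 ->
  (forall j, p j + q j + r j = 1) ->
  psi (~` `[-1, 1]) = 0%E ->
  infinite_set (msupport psi) ->
  (forall n m, n <> m ->
     (\int[psi]_x (Qpoly p q r n x * Qpoly p q r m x)%:E = 0)%E) ->
  forall n, 0 < Qpoly p q r n (sup (msupport psi)).
Proof.
move=> hp hq q0 hs h0 hinf horth n.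
have [_ [he1 _]] := eta_facts psi h0 hinf.
set eta := sup (msupport psi) in he1 *.
rewrite ltNge; apply/negP => hle.
have cf : continuous (Qpoly p q r n).
  have -> : Qpoly p q r n = horner (PQ p q r n) by apply/funext => x; rewrite PQ_horner.
  exact: continuous_horner.
have h1 := Q_at1 p q r hp hq q0 hs n.
have [c hc hfc] : exists2 c, c \in `[eta, 1] & Qpoly p q r n c = 0.
  apply: IVT => //; first exact: continuous_subspaceT.
  rewrite h1; apply/andP; split.
    by rewrite ge_min hle.
  by rewrite le_max ler01 orbT.
move: hc; rewrite in_itv /= => /andP [hc1 _].
by have := no_root p q r psi hp h0 hinf horth n c hc1; rewrite hfc eqxx.
Qed.


Theorem proposition1 (R : realType) (p q r : nat -> R)
  (psi : probability R R) :
  (forall j, 0 < p j) -> (forall j, 0 < q j.+1) -> (forall j, 0 <= r j) ->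
  q 0 = 0 -> (forall j, p j + q j + r j = 1) ->
  (* psi is a Borel probability measure on [-1,1] with infinite support *)
  psi (~` `[-1, 1]) = 0%E ->
  infinite_set (msupport psi) ->
  (* the Q_n are orthogonal with respect to psi *)
  (forall n m, n <> m ->
     (\int[psi]_x (Qpoly p q r n x * Qpoly p q r m x)%:E = 0)%E) ->
  (fun N => \sum_(0 <= j < N)
       (p j * pi_rw p q j)^-1 * \sum_(0 <= k < j.+1) r k * pi_rw p q k)
     @ \oo --> +oo ->
  let eta := sup (msupport psi) in
  (fun n => `| Qpoly p q r n (- eta) / Qpoly p q r n eta |) @ \oo --> +oo.
Proof.
move=> hp hq hr q0 hs h0 hinf horth hdiv eta.
have [_ [he1 _]] := eta_facts psi h0 hinf.
apply: final_alg => //.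
exact: Q_pos.
Qed.
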